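(* Let $1<\chi\le\rho$. The strategy driven by a $(\rho,\chi)$-bidding profile is $\rho$-robust and $\chi$-consistent.
   Context: Online bidding with target $T>0$ and prediction normalized to $1$: a bidder submits increasing positive bids until one is $\ge T$; the cost is the sum of bids up to and including the first bid $\ge T$. A (randomized) strategy $B$ with expected cost $\mathrm{cost}_B(T)$ is $\chi$-consistent if $\mathrm{cost}_B(1)\le\chi$ and $\rho$-robust if $\mathrm{cost}_B(T)\le\rho T$ for all $T>0$. Given $1<\chi\le\rho$, a $(\rho,\chi)$-bidding profile is a non-decreasing, left-continuous $G:\mathbb{R}\to(0,\infty)$ with (offset) $G(x)<1$ for $x<0$ and $G(x)\ge1$ for $x>0$; (robustness) $\int_{-\infty}^{x+1}G(t)\,\mathrm{d} t\le\rho G(x)$ for all $x\in\mathbb{R}$; (consistency) $\int_{-\infty}^1 G(t)\,\mathrm{d} t\le\chi$. The strategy driven by $G$ is the random bid sequence $(G(n+U))_{n\in\mathbb{Z}}$ with a single shared $U\sim\mathrm{Unif}(0,1]$; on target $T$ its cost is $\sum_{n\le n_*}G(n+U)$ where $n_*=\min\{n:G(n+U)\ge T\}$. *)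

(* Defs.v *)
From HB Require Import structures.
From mathcomp Require Import all_boot all_order all_algebra.
From mathcomp Require Import all_classical all_reals all_analysis.
Set Implicit Arguments. Unset Strict Implicit. Unset Printing Implicit Defensive.
Import Order.TTheory GRing.Theory Num.Theory.
Import numFieldNormedType.Exports.
Local Open Scope classical_set_scope.
Local Open Scope ring_scope.

Definition bidding_profile (R : realType) (rho chi : R) (G : R -> R) : Prop :=
  [/\ (forall x, 0 < G x) /\ {homo G : x y / x <= y},
      (forall a : R, G x @[x --> a^'-] --> G a),
      (forall x, x < 0 -> G x < 1) /\ (forall x, 0 < x -> 1 <= G x),
      (forall x : R, (\int[lebesgue_measure]_(t in `]-oo, (x + 1)%R]) (G t)%:E
                       <= (rho * G x)%:E)%E)
    & (\int[lebesgue_measure]_(t in `]-oo, 1%R]) (G t)%:E <= chi%:E)%E ].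

(* Bid n (for n : int) of the strategy driven by G, for the shared value u of U. *)
Definition bid (R : realType) (G : R -> R) (u : R) (n : int) : R := G (n%:~R + u).

(* Cost on target T for a realization u of U: the sum of all bids that are
   actually submitted, i.e. bids n such that every earlier bid m < n was < T.
   These are exactly the n <= n_* where n_* = min {n | G(n+u) >= T}. *)
Definition cost_at (R : realType) (G : R -> R) (T u : R) : \bar R :=
  (\esum_(n in [set n : int | forall m : int, (m < n)%R -> (bid G u m < T)%R])
      (bid G u n)%:E)%E.

Definition exp_cost (R : realType) (G : R -> R) (T : R) : \bar R :=
  (\int[lebesgue_measure]_(u in `]0%R, 1%R]) cost_at G T u)%E.

(* Main.v *)
Require Import Defs.
From HB Require Import structures.
From mathcomp Require Import all_boot all_order all_algebra.
From mathcomp Require Import all_classical all_reals all_analysis.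
From mathcomp Require Import measurable_realfun.
From mathcomp Require Import ring lra zify.
Set Implicit Arguments. Unset Strict Implicit. Unset Printing Implicit Defensive.
Import Order.TTheory GRing.Theory Num.Theory.
Import numFieldNormedType.Exports.
Local Open Scope classical_set_scope.
Local Open Scope ring_scope.

Local Notation mu := lebesgue_measure.

Lemma mshift (R : realType) (c : R) : measurable_fun [set: measurableTypeR R] ((fun x => x + c) : measurableTypeR R -> measurableTypeR R).
Proof. by apply: nondecreasing_measurable => // x y xy; rewrite lerD2r. Qed.

Lemma pushforward_shift (R : realType) (c : R) (A : set R) : measurable A ->
  pushforward mu ((fun x => x + c) : measurableTypeR R -> measurableTypeR R) A = mu A.
Proof.
move=> mA; apply/esym/lebesgue_measure_unique => //=.
  exact: mshift.
  move=> _ X [[a b] _ <-] /=.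
  rewrite /pushforward.
  have -> : (fun x : R => x + c) @^-1` `]a, b] = `]a - c, b - c]%classic.
    by apply/seteqP; split => x /=; rewrite !in_itv /= ltrBlDr lerBrDr.
  rewrite !lebesgue_measure_itv /= !lte_fin ltrD2r.
  case: ifP => // _; rewrite -!EFinD; congr (_%:E); ring.
Qed.

Lemma integral_shift (R : realType) (c : R) (D : set R) (F : R -> \bar R) :
  measurable D -> measurable_fun D F -> (forall x, D x -> (0 <= F x)%E) ->
  (\int[mu]_(x in D) F x = \int[mu]_(x in (fun x => x + c)%R @^-1` D) F (x + c)%R)%E.
Proof.
move=> mD mF F0.
have := @ge0_integral_pushforward _ _ _ _ _ ((fun x => x + c) : measurableTypeR R -> measurableTypeR R) (mshift c) mu D F mD mF.
rewrite /comp => <-; last by move=> x; rewrite inE => /F0.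
apply: eq_measure_integral; first exact: mshift.
by move=> ? A mA _; symmetry; exact: pushforward_shift.
Qed.

Lemma ge0_le_integral_nm (R : realType) (D : set R) (f g : R -> \bar R) :
  (forall x, D x -> (0 <= f x)%E) -> (forall x, D x -> (f x <= g x)%E) ->
  (\int[mu]_(x in D) f x <= \int[mu]_(x in D) g x)%E.
Proof.
move=> f0 fg.
have g0 : forall x, D x -> (0 <= g x)%E by move=> x Dx; exact: le_trans (f0 x Dx) (fg x Dx).
rewrite !ge0_integralE //.
apply: ge_ereal_sup => _ [h hf <-]; apply: ereal_sup_ubound; exists h => //= x.
apply: le_trans (hf x) _; exact: lee_restrict.
Qed.

Lemma esum_le_sub (R : realType) (T : choiceType) (I J : set T) (a b : T -> \bar R) :
  I `<=` J -> (forall i, I i -> (a i <= b i)%E) ->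
  (\esum_(i in I) a i <= \esum_(i in J) b i)%E.
Proof.
move=> IJ le_ab; rewrite ge_ereal_sup => //= _ [X [finX XI]] <-; rewrite esum_ge//.
exists X; first by split => //; exact: subset_trans XI IJ.
by apply: lee_fsum => // t /XI /le_ab.
Qed.

Lemma exp_cost_le (R : realType) (G : R -> R) (T b : R) :
  (forall x, 0 < G x) -> {homo G : x y / x <= y} ->
  (forall (u : R) (n : int), 0 < u ->
     (forall m : int, m < n -> bid G u m < T) -> n%:~R + u <= b) ->
  (exp_cost G T <= \int[mu]_(t in `]-oo, b]) (G t)%:E)%E.
Proof.
move=> Gpos Gnd Hb.
pose F := (EFin \o G) \_ `]-oo, b]%classic.
have mG : measurable_fun [set: R] (EFin \o G).
  by apply/measurable_EFinP; apply: nondecreasing_measurable.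
have mF : measurable_fun [set: R] F.
  by apply/(measurable_restrictT _ _).1 => //; exact: measurable_funS mG.
have F0 : forall t, (0 <= F t)%E.
  by move=> t; rewrite /F /patch; case: ifP => // _; rewrite lee_fin ltW.
pose c := Num.ceil b.
have bc : b <= c%:~R by exact: Num.Theory.ceil_ge.
pose d (k : nat) : R := c%:~R - k%:R.
pose a (k : nat) (u : R) := F (u + d k).
have step1 : forall u, 0 < u -> (cost_at G T u <= \sum_(k <oo) a k u)%E.
  move=> u u0; rewrite /cost_at.
  apply: le_trans; first apply: (@esum_le_sub _ _ _ [set n : int | (n <= c)%R] _ (fun n : int => F (n%:~R + u))).
  - move=> n /= Hn.
      rewrite -(ler_int R); apply: le_trans bc; apply: le_trans (Hb u n u0 Hn).
      by rewrite lerDl ltW.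
  - move=> n /= Hn.
    rewrite /F /patch /= ifT //; rewrite inE /= in_itv /=; exact: Hb.
  rewrite (@reindex_esum _ _ _ setT [set n : int | (n <= c)%R] (fun k : nat => c - k%:Z)).
    rewrite -nneseries_esumT; last by move=> k; exact: F0.
    rewrite le_eqVlt; apply/orP; left; apply/eqP; apply: eq_eseriesr => k _.
    by rewrite /a /d rmorphB /= addrC.
  split.
  - by move=> k _ /=; lia.
  - by move=> i j _ _ h; lia.
  - move=> n /= nc; exists (`|c - n|%N) => //=; lia.
pose I (k : nat) := `]d k, d k + 1]%classic.
have mI : forall k, measurable (I k) by move=> k; exact: measurable_itv.
have ma : forall k, measurable_fun (`]0%R, 1%R]%classic : set R) (a k).
  move=> k; apply: (@measurable_funS _ _ _ _ setT) => //.
  exact: (measurableT_comp mF (mshift (d k))).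
rewrite /exp_cost.
apply: le_trans; first apply: (@ge0_le_integral_nm _ _ _ (fun u => \sum_(k <oo) a k u)%E).
- by move=> u _; rewrite /cost_at; apply: esum_ge0 => n _; rewrite lee_fin; exact/ltW/Gpos.
- by move=> u; rewrite /= in_itv /= => /andP[u0 _]; exact: step1.
rewrite integral_nneseries //; last by move=> k u _; exact: F0.
have eI : forall k, (\int[mu]_(u in (`]0%R, 1%R]%classic : set R)) a k u = \int[mu]_(t in I k) F t)%E.
  move=> k; rewrite (integral_shift (d k) (mI k) (measurable_funS measurableT (@subsetT _ _) mF) (fun x _ => F0 x)).
  have -> : (fun x => x + d k) @^-1` I k = (`]0%R, 1%R]%classic : set R).
    by apply/seteqP; split => x; rewrite /I /= !in_itv /= => /andP[h1 h2]; apply/andP; split; lra.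
  by [].
rewrite (eq_eseriesr (fun k _ => eI k)).
have tI : trivIset setT I.
  apply/trivIsetP => i j _ _ ij; apply/seteqP; split => // x [].
  rewrite /I /d /= !in_itv /= => /andP[h1 h2] /andP[h3 h4].
  have H1 : (j%:R < i%:R + 1 :> R) by lra.
  have H2 : (i%:R < j%:R + 1 :> R) by lra.
  rewrite natr1 ltr_nat in H1; rewrite natr1 ltr_nat in H2.
  move: ij; lia.
rewrite -ge0_integral_bigcup //; last first.
  exact: (measurable_funS measurableT (@subsetT _ _) mF).
rewrite [X in (_ <= X)%E]integral_mkcond.
exact: (@ge0_subset_integral _ _ _ mu (\bigcup_k I k) setT (bigcup_measurable (fun k _ => mI k)) measurableT F mF (fun x _ => F0 x) (@subsetT _ _)).
Qed.

Theorem corollary1 (R : realType) (rho chi : R) (G : R -> R) :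
  1 < chi -> chi <= rho -> bidding_profile rho chi G ->
  (forall T : R, 0 < T -> (exp_cost G T <= (rho * T)%:E)%E) /\
  (exp_cost G 1 <= chi%:E)%E.
Proof.
move=> chi1 chirho [[Gpos Gnd] Glc [Gneg Gge1] Hrob Hcons].
have rho0 : 0 < rho by lra.
have mG : measurable_fun [set: R] (EFin \o G).
  by apply/measurable_EFinP; apply: nondecreasing_measurable.
have Gm1 : forall (u : R) (n : int), bid G u (n - 1) = G ((n%:~R + u) - 1).
  by move=> u n; rewrite /bid rmorphB /=; congr G; lra.
split.
- move=> T T0.
  case: (pselect (exists x, G x < T)) => [[x0 Hx0]|nE]; last first.
    rewrite /exp_cost (eq_integral (cst 0%E)); last first.
      move=> u _; rewrite /cost_at.
      have -> : [set n : int | forall m : int, m < n -> bid G u m < T] = set0.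
        apply/seteqP; split => // n /= Hn; apply: nE.
        exists ((n - 1)%:~R + u); apply: (Hn (n - 1)); lia.
      by rewrite esum_set0.
    by rewrite integral0 lee_fin mulr_ge0 // ltW.
  pose E := [set x | G x < T].
  have Eub : forall x, E x -> x < rho * T.
    move=> x /= Ex.
    case: (leP x 0) => [xle|xgt]; first by apply: le_lt_trans xle _; exact: mulr_gt0.
    have h1 : ((x + 1)%:E <= \int[lebesgue_measure]_(t in `]-oo, (x + 1)%R]) (G t)%:E)%E.
      apply: le_trans (@ge0_subset_integral _ _ _ lebesgue_measure `]0%R, (x + 1)%R]%classic _
         (measurable_itv _) (measurable_itv _) _ (measurable_funS measurableT (@subsetT _ _) mG)
         (fun t _ => ltW (Gpos t) : (0 <= (G t)%:E)%E) _).
        apply: le_trans (@ge0_le_integral_nm _ _ (cst 1%E) _ _ _).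
        + rewrite integral_cst //= lebesgue_measure_itv /= lte_fin.
          have -> : (0 < x + 1) = true by apply/idP; lra.
          by rewrite mul1e oppr0 adde0.
        + by move=> t _; rewrite /= lee_fin.
        + by move=> t; rewrite /= in_itv /= => /andP[t0 _]; rewrite lee_fin Gge1.
      by move=> t; rewrite /= !in_itv /= => /andP[].
    have h2 := le_trans h1 (Hrob x); rewrite lee_fin in h2.
    have h3 : rho * G x < rho * T by rewrite ltr_pM2l.
    lra.
  have hsE : has_sup E.
    by split; [exists x0 | exists (rho * T) => x /Eub/ltW].
  pose s := sup E.
  have sE : forall x, E x -> x <= s by move=> x Ex; exact: sup_upper_bound.
  have Gs : G s <= T.
    rewrite leNgt; apply/negP => Ts.
    have h1 : \forall t \near s^'-, T < G t by apply: cvgr_gt (Glc s) _ Ts.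
    have h2 : \forall t \near s^'-, G t < T.
      apply: filterS (nbhs_left_lt s) => t ts.
      have st : 0 < s - t by rewrite subr_gt0.
      have [e Ee et] := sup_adherent st hsE.
      apply: le_lt_trans (Ee); apply: Gnd; move: et; rewrite /s; lra.
    have [t [t1 t2]] := @filter_ex R (at_left s) (at_left_proper_filter s) _ (@filterI R (at_left s) _ _ _ h1 h2).
    lra.
  apply: le_trans (@exp_cost_le _ G T (s + 1) Gpos Gnd _) _.
    move=> u n u0 Hn.
    have := Hn (n - 1); rewrite Gm1 => /(_ ltac:(lia)) /sE; lra.
  apply: le_trans (Hrob s) _; rewrite lee_fin ler_pM2l //.
- apply: le_trans (@exp_cost_le _ G 1 1 Gpos Gnd _) Hcons.
  move=> u n u0 Hn.
  have := Hn (n - 1); rewrite Gm1 => /(_ ltac:(lia)) h.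
  have : (n%:~R + u - 1 <= 0).
    rewrite leNgt; apply/negP => /Gge1; rewrite leNgt h.
    by [].
  lra.
Qed.
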